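(* Let $\mathbf{A}=(\mathcal{P},\mathcal{L},\parallel)$ and $\mathbf{A}'=(\mathcal{P}',\mathcal{L}',\parallel')$ be affine spaces with $\dim\mathbf{A}'\ge 3$. Suppose that $\varphi:\mathcal{L}\to\mathcal{L}'$ is an isomorphism of the Plücker space $(\mathcal{L},\sim)$ onto the Plücker space $(\mathcal{L}',\sim')$, i.e. a bijection such that for all $a,b\in\mathcal{L}$: $a\sim b \iff a^\varphi\sim' b^\varphi$. Then the mapping $$\kappa:\mathcal{P}\to\mathcal{P}',\qquad a\cap b\mapsto a^\varphi\cap b^\varphi\quad(a,b\in\mathcal{L},\ a\approx b)$$ is well defined (i.e. for adjacent lines $a,b$ the lines $a^\varphi,b^\varphi$ meet in exactly one point, and this point depends only on the point $a\cap b$, not on the choice of the adjacent lines $a,b$ through it), and $\kappa$ is a collineation.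
   Context: An affine space $\mathbf{A}=(\mathcal{P},\mathcal{L},\parallel)$ has point set $\mathcal{P}$, line set $\mathcal{L}$ (lines viewed as subsets of $\mathcal{P}$) and parallelism $\parallel$. Two lines $a,b\in\mathcal{L}$ are called related, written $a\sim b$, if $a\cap b\neq\emptyset$ (so every line is related to itself); they are adjacent, written $a\approx b$, if $a\sim b$ and $a\neq b$. The pair $(\mathcal{L},\sim)$ is called the affine Plücker space on $\mathbf{A}$; similarly $\sim'$, $\approx'$ for $\mathbf{A}'$. The image of $x$ under a map $\varphi$ is written $x^\varphi$. A collineation $\mathcal{P}\to\mathcal{P}'$ is a bijection that maps collinear triples of points to collinear triples and non-collinear triples to non-collinear triples. *)

(* Defs.v *)
Set Implicit Arguments.

(** An affine space (P, L, ||) in the sense of Lenz / Karzel–Kroll: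
    lines are determined by their point sets ("lines viewed as subsets of P"). *)
Record affine_space := AffineSpace {
  point : Type;
  line : Type;
  on : point -> line -> Prop;
  par : line -> line -> Prop;
  line_ext : forall l m : line, (forall p, on p l <-> on p m) -> l = m;
  join_ax : forall p q : point, p <> q -> exists l, on p l /\ on q l /\
              forall m, on p m -> on q m -> m = l;
  two_points : forall l : line, exists p q, p <> q /\ on p l /\ on q l;
  par_refl : forall l, par l l;
  par_sym : forall l m, par l m -> par m l;
  par_trans : forall l m n, par l m -> par m n -> par l n;
  euclid : forall (p : point) (l : line), exists m, par m l /\ on p m /\
              forall m', par m' l -> on p m' -> m' = m;
  triangle : forall (a b c a' b' : point) (lab lac lbc l' m n : line),
      (~ exists l, on a l /\ on b l /\ on c l) ->
      on a lab -> on b lab -> on a lac -> on c lac -> on b lbc -> on c lbc ->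
      a' <> b' -> on a' l' -> on b' l' -> par lab l' ->
      on a' m -> par m lac -> on b' n -> par n lbc ->
      exists c', on c' m /\ on c' n
}.

Arguments on {a} p l : rename.
Arguments par {a} l m : rename.

Section Notions.
Context {A : affine_space}.

Definition related (a b : line A) : Prop := exists p, on p a /\ on p b.
Definition adjacent (a b : line A) : Prop := related a b /\ a <> b.

Definition collinear (x y z : point A) : Prop :=
  exists l, on x l /\ on y l /\ on z l.

Definition subspace (T : point A -> Prop) : Prop :=
  (forall x y l, x <> y -> T x -> T y -> on x l -> on y l ->
     forall z, on z l -> T z) /\
  (forall l m x, (forall z, on z l -> T z) -> T x -> on x m -> par m l ->
     forall z, on z m -> T z).

Definition span (S : point A -> Prop) (x : point A) : Prop :=
  forall T, subspace T -> (forall y, S y -> T y) -> T x.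

(* dim A >= 3: A contains a plane (span of three non-collinear points)
   that is not the whole point set *)
Definition dim_ge3 : Prop :=
  exists a b c d, ~ collinear a b c /\
    ~ span (fun x => x = a \/ x = b \/ x = c) d.

End Notions.

Definition bijective_map (X Y : Type) (f : X -> Y) : Prop :=
  exists g : Y -> X, (forall x, g (f x) = x) /\ (forall y, f (g y) = y).

Definition plucker_iso {A A' : affine_space} (phi : line A -> line A') : Prop :=
  bijective_map phi /\
  forall a b, related a b <-> related (phi a) (phi b).

Definition collineation {A A' : affine_space} (k : point A -> point A') : Prop :=
  bijective_map k /\
  forall x y z, (collinear x y z -> collinear (k x) (k y) (k z)) /\
                (~ collinear x y z -> ~ collinear (k x) (k y) (k z)).

(* Main.v *)
Require Import Defs.
From Stdlib Require Import Classical ClassicalEpsilon.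

Lemma line_uniq {X : affine_space} (p q : point X) (l m : line X) :
  p <> q -> on p l -> on q l -> on p m -> on q m -> l = m.
Proof.
  intros Hpq Hpl Hql Hpm Hqm.
  destruct (join_ax X Hpq) as [k [_ [_ Hk]]].
  rewrite (Hk l Hpl Hql), (Hk m Hpm Hqm). reflexivity.
Qed.

Lemma par_uniq {X : affine_space} (p : point X) {m1 m2 l : line X} :
  par m1 l -> par m2 l -> on p m1 -> on p m2 -> m1 = m2.
Proof.
  intros H1 H2 H3 H4. destruct (euclid X p l) as [m [_ [_ Hm]]].
  rewrite (Hm m1 H1 H3), (Hm m2 H2 H4). reflexivity.
Qed.

Lemma par_eq {X : affine_space} (p : point X) {m1 m2 : line X} :
  par m1 m2 -> on p m1 -> on p m2 -> m1 = m2.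
Proof. intros H H1 H2. exact (par_uniq p H (par_refl X m2) H1 H2). Qed.

Lemma parl {X : affine_space} {m1 m2 l : line X} : par m1 l -> par m2 l -> par m1 m2.
Proof. intros H1 H2. apply (par_trans X m1 l m2 H1). apply par_sym; exact H2. Qed.

Lemma join {X : affine_space} {p q : point X} : p <> q -> exists l, on p l /\ on q l.
Proof. intro H. destruct (join_ax X H) as [l [H1 [H2 _]]]. eauto. Qed.

Lemma lemA {X : affine_space} (a b c a' : point X) (lab lac lbc l' : line X) :
  ~ collinear a b c -> on a lab -> on b lab -> on a lac -> on c lac ->
  on b lbc -> on c lbc -> on a' lac -> on a' l' -> par l' lab -> related l' lbc.
Proof.
  intros Hn Ha1 Hb1 Ha2 Hc2 Hb3 Hc3 Ha' Hl' Hp.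
  destruct (classic (a' = c)) as [E|Ne].
  - subst. exists c. auto.
  - destruct (@triangle X a c b a' c lac lab lbc lac l' lbc)
      as [s [H1 H2]]; auto.
    + intros [l [H1 [H2 H3]]]. apply Hn. exists l; auto.
    + apply par_refl.
    + apply par_refl.
    + exists s; auto.
Qed.

Lemma lemPg {X : affine_space} (o u v : point X) (lou lov m n : line X) :
  ~ collinear o u v -> u <> v -> on o lou -> on u lou -> on o lov -> on v lov ->
  on v m -> par m lou -> on u n -> par n lov -> related m n.
Proof.
  intros Hn Huv H1 H2 H3 H4 H5 H6 H7 H8.
  destruct (join Huv) as [luv [Hu Hv]].
  destruct (@triangle X u v o v u luv lou lov luv m n)
      as [s [S1 S2]]; auto.
  - intros [l [A1 [A2 A3]]]. apply Hn. exists l; auto.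
  - apply par_refl.
  - exists s; auto.
Qed.

Definition inplane {X : affine_space} (l g : line X) (w : point X) :=
  exists k, on w k /\ par k l /\ related k g.

Lemma plane_join {X : affine_space} (l g k : line X) (x1 x2 z : point X) :
  x1 <> x2 -> inplane l g x1 -> inplane l g x2 -> on x1 k -> on x2 k -> on z k ->
  inplane l g z.
Proof.
  intros H12 [p1 [Hx1 [Hp1 [v1 [Hv1p Hv1g]]]]] [p2 [Hx2 [Hp2 [v2 [Hv2p Hv2g]]]]] H1k H2k Hzk.
  destruct (classic (p1 = p2)) as [E|Npp].
  - subst p2. assert (k = p1) by (eapply line_uniq; eauto). subst k.
    exists p1. split; [assumption|split; [assumption| exists v1; split; assumption]].
  - destruct (euclid X z l) as [pz [Hpz [Hzpz _]]].
    assert (Hx1p2 : ~ on x1 p2).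
    { intro H. apply Npp. exact (par_uniq x1 Hp1 Hp2 Hx1 H). }
    assert (Hv2p1 : ~ on v2 p1).
    { intro H. apply Npp. exact (par_uniq v2 Hp1 Hp2 H Hv2p). }
    assert (Hx1v2 : x1 <> v2) by (intro; subst; contradiction).
    destruct (join Hx1v2) as [k2 [K1 K2]].
    assert (Hs : exists s, on s pz /\ on s k2).
    { destruct (classic (x2 = v2)) as [E|Ne].
      - subst v2. assert (k2 = k) by (eapply line_uniq; eauto). subst. eauto.
      - apply (lemA x2 v2 x1 z p2 k k2 pz); auto.
        + intros [m [M1 [M2 M3]]]. assert (m = p2) by (eapply line_uniq; eauto).
          subst; contradiction.
        + exact (parl Hpz Hp2). }
    destruct Hs as [s [S1 S2]].
    exists pz. split; [assumption | split; [assumption|]].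
    assert (Hv12 : v1 <> v2).
    { intro E; subst. apply Npp. exact (par_uniq v2 Hp1 Hp2 Hv1p Hv2p). }
    destruct (classic (x1 = v1)) as [E|Ne].
    + subst v1. assert (k2 = g) by (eapply line_uniq; eauto). subst. exists s; auto.
    + apply (lemA x1 v1 v2 s p1 k2 g pz); auto.
      * intros [m [M1 [M2 M3]]]. assert (m = p1) by (eapply line_uniq; eauto).
        subst; contradiction.
      * exact (parl Hpz Hp1).
Qed.

Lemma plane_meet {X : affine_space} (l g k p1 p2 pq : line X) (x1 x2 v1 v2 vq : point X) :
  x1 <> x2 -> on x1 k -> on x2 k ->
  on x1 p1 -> par p1 l -> on v1 p1 -> on v1 g ->
  on x2 p2 -> par p2 l -> on v2 p2 -> on v2 g -> p1 <> p2 ->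
  par pq l -> on vq pq -> on vq g -> related pq k.
Proof.
  intros H12 H1k H2k Hx1 Hp1 Hv1p Hv1g Hx2 Hp2 Hv2p Hv2g Npp Hpq Hvq Hvqg.
  assert (Hx1p2 : ~ on x1 p2).
  { intro H. apply Npp. exact (par_uniq x1 Hp1 Hp2 Hx1 H). }
  assert (Hv2p1 : ~ on v2 p1).
  { intro H. apply Npp. exact (par_uniq v2 Hp1 Hp2 H Hv2p). }
  assert (Hx1v2 : x1 <> v2) by (intro; subst; contradiction).
  assert (Hv12 : v1 <> v2).
  { intro E; subst. apply Npp. exact (par_uniq v2 Hp1 Hp2 Hv1p Hv2p). }
  destruct (join Hx1v2) as [k2 [K1 K2]].
  assert (Hs : exists s, on s pq /\ on s k2).
  { destruct (classic (x1 = v1)) as [E|Ne].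
    - subst v1. assert (k2 = g) by (eapply line_uniq; eauto). subst. eauto.
    - apply (lemA v1 x1 v2 vq p1 g k2 pq); auto.
      + intros [m [M1 [M2 M3]]]. assert (m = p1) by (eapply line_uniq; eauto).
        subst; contradiction.
      + exact (parl Hpq Hp1). }
  destruct Hs as [s [S1 S2]].
  destruct (classic (x2 = v2)) as [E|Ne].
  - subst v2. assert (k2 = k) by (eapply line_uniq; eauto). subst. exists s; auto.
  - apply (lemA v2 x2 x1 s p2 k2 k pq); auto.
    + intros [m [M1 [M2 M3]]]. assert (m = p2) by (eapply line_uniq; eauto).
      subst; contradiction.
    + exact (parl Hpq Hp2).
Qed.
Lemma plane_par {X : affine_space} (l g k m : line X) (q : point X) :
  (forall z, on z k -> inplane l g z) -> inplane l g q -> on q m -> par m k ->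
  forall z, on z m -> inplane l g z.
Proof.
  intros Hk [pq [Hqpq [Hpq [vq [Hvq Hvqg]]]]] Hqm Hmk z Hzm.
  destruct (two_points X k) as [y1 [y2 [Hy12 [Hy1 Hy2]]]].
  destruct (Hk y1 Hy1) as [p1 [Hx1 [Hp1 [v1 [Hv1p Hv1g]]]]].
  destruct (Hk y2 Hy2) as [p2 [Hx2 [Hp2 [v2 [Hv2p Hv2g]]]]].
  destruct (classic (p1 = p2)) as [E|Npp].
  - subst p2. assert (k = p1) by (eapply line_uniq; eauto). subst k.
    assert (Hml : par m l) by (exact (par_trans X _ _ _ Hmk Hp1)).
    assert (m = pq) by (exact (par_uniq q Hml Hpq Hqm Hqpq)). subst m.
    exists pq. split; [assumption|split;[assumption|exists vq; auto]].
  - assert (Hkl : ~ par k l).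
    { intro H. apply Npp. rewrite (par_uniq y1 Hp1 H Hx1 Hy1).
      exact (par_uniq y2 H Hp2 Hy2 Hx2). }
    destruct (plane_meet l g k p1 p2 pq y1 y2 v1 v2 vq) as [y [Hyq Hyk]]; auto.
    assert (Hpqk : pq <> k) by (intro; subst; contradiction).
    destruct (classic (q = y)) as [E|Nqy].
    + subst y. assert (m = k) by (exact (par_eq q Hmk Hqm Hyk)). subst m.
      apply Hk; assumption.
    + assert (Hy' : exists y', on y' k /\ y' <> y).
      { destruct (classic (y1 = y)); [exists y2; split; [auto| intro; subst; auto]|exists y1; auto]. }
      destruct Hy' as [y' [Hy'k Hy'y]].
      destruct (Hk y' Hy'k) as [p' [Hy'p' [Hp' [v' [Hv'p Hv'g]]]]].
      assert (Hqk : ~ on q k).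
      { intro H. apply Hpqk. exact (line_uniq q y pq k Nqy Hqpq Hyq H Hyk). }
      assert (Hy'q : y' <> q) by (intro; subst; contradiction).
      destruct (lemPg y y' q k pq m p') as [s [Hsm Hsp']]; auto.
      * intros [n [N1 [N2 N3]]]. assert (n = k) by (exact (line_uniq y' y n k Hy'y N2 N1 Hy'k Hyk)). subst; contradiction.
      * exact (parl Hp' Hpq).
      * assert (Hsq : s <> q).
        { intro E. subst s. assert (p' = pq) by (exact (par_uniq q Hp' Hpq Hsp' Hqpq)). subst p'.
          apply Hpqk. exact (line_uniq y' y pq k Hy'y Hy'p' Hyq Hy'k Hyk). }
        apply (plane_join l g m q s z); auto.
        -- exists pq. split; [assumption|split;[assumption|exists vq; auto]].
        -- exists p'. split; [assumption|split;[assumption|exists v'; auto]].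
Qed.

Lemma plane_subspace {X : affine_space} (l g : line X) : subspace (inplane l g).
Proof.
  split.
  - intros x y k Hxy Hx Hy Hxk Hyk z Hz. exact (plane_join l g k x y z Hxy Hx Hy Hxk Hyk Hz).
  - intros k m x Hk Hx Hxm Hmk z Hz. exact (plane_par l g k m x Hk Hx Hxm Hmk z Hz).
Qed.

Definition Full3 {X : affine_space} (a b c : point X) :=
  forall T, subspace T -> T a -> T b -> T c -> forall w, T w.

Lemma sub_line {X : affine_space} (T : point X -> Prop) (x y : point X) (k : line X) :
  subspace T -> x <> y -> T x -> T y -> on x k -> on y k -> forall z, on z k -> T z.
Proof. intros [HJ _]. eauto. Qed.

Lemma col_of_eq {X : affine_space} (a c : point X) :
  (forall p : point X, exists l : line X, on p l) -> exists l, on a l /\ on c l.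
Proof.
  intro HL. destruct (classic (a = c)) as [E|N].
  - subst. destruct (HL c) as [l Hl]; eauto.
  - exact (join N).
Qed.

Lemma noncol_ne {X : affine_space} (a b c : point X) :
  (forall p : point X, exists l : line X, on p l) -> ~ collinear a b c ->
  a <> b /\ a <> c /\ b <> c.
Proof.
  intros HL Hn. repeat split; intro E; subst; apply Hn.
  - destruct (col_of_eq b c HL) as [l [H1 H2]]. exists l; auto.
  - destruct (col_of_eq c b HL) as [l [H1 H2]]. exists l; auto.
  - destruct (col_of_eq a c HL) as [l [H1 H2]]. exists l; auto.
Qed.

Lemma KEX {X : affine_space} (u v r w : point X) :
  (forall p : point X, exists l : line X, on p l) ->
  ~ collinear u v r -> Full3 u v r -> ~ collinear u v w -> Full3 u v w.
Proof.
  intros HL Hn Hf Hw.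
  destruct (noncol_ne u v r HL Hn) as [Huv [Hur Hvr]].
  destruct (join Huv) as [l [Hul Hvl]].
  destruct (join (not_eq_sym Hur)) as [g [Hrg Hug]].
  assert (Hin : inplane l g w).
  { apply (Hf (inplane l g) (plane_subspace l g)).
    - exists l. split; [auto|split; [apply par_refl|exists u; auto]].
    - exists l. split; [auto|split; [apply par_refl|exists u; auto]].
    - destruct (euclid X r l) as [pr [Hpr [Hrpr _]]].
      exists pr. split; [auto|split; [auto|exists r; auto]]. }
  destruct Hin as [pw [Hwpw [Hpw [vw [Hvw Hvwg]]]]].
  intros T HT Tu Tv Tw.
  assert (Tl : forall z, on z l -> T z) by (exact (sub_line T u v l HT Huv Tu Tv Hul Hvl)).
  assert (Tpw : forall z, on z pw -> T z).
  { destruct HT as [_ HP]. exact (HP l pw w Tl Tw Hwpw Hpw). }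
  assert (Hvwu : vw <> u).
  { intro E. subst vw. assert (pw = l) by (exact (par_eq u Hpw Hvw Hul)). subst.
    apply Hw. exists l; auto. }
  apply (Hf T HT Tu Tv).
  exact (sub_line T vw u g HT Hvwu (Tpw vw Hvw) Tu Hvwg Hug r Hrg).
Qed.

Lemma KEX2 {X : affine_space} (u v r w : point X) (l : line X) :
  Full3 u v r -> on u l -> on v l -> on w l -> w <> u -> Full3 u w r.
Proof.
  intros Hf Hu Hv Hw Hwu T HT Tu Tw Tr.
  apply (Hf T HT Tu); auto.
  exact (sub_line T u w l HT (not_eq_sym Hwu) Tu Tw Hu Hw v Hv).
Qed.

Lemma Full3_213 {X : affine_space} (a b c : point X) : Full3 a b c -> Full3 b a c.
Proof. intros H T HT Ta Tb Tc. apply (H T HT); auto. Qed.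
Lemma Full3_132 {X : affine_space} (a b c : point X) : Full3 a b c -> Full3 a c b.
Proof. intros H T HT Ta Tb Tc. apply (H T HT); auto. Qed.
Lemma Full3_231 {X : affine_space} (a b c : point X) : Full3 a b c -> Full3 c a b.
Proof. intros H T HT Ta Tb Tc. apply (H T HT); auto. Qed.

Lemma ncol_perm {X : affine_space} (a b c : point X) :
  ~ collinear a b c -> ~ collinear b a c /\ ~ collinear a c b /\ ~ collinear c a b /\
  ~ collinear b c a /\ ~ collinear c b a.
Proof.
  intro H. repeat split; intros [l [H1 [H2 H3]]]; apply H; exists l; auto.
Qed.

Lemma no_full {X : affine_space} : @dim_ge3 X ->
  forall x y z : point X, ~ collinear x y z -> ~ Full3 x y z.
Proof.
  intros [a [b [c [d [Hnc Hns]]]]] x y z Hxyz Hf.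
  assert (Had : a <> d).
  { intro E. subst d. apply Hns. intros T _ HS. apply HS; auto. }
  destruct (join Had) as [l0 [Hal0 _]].
  assert (HL : forall p : point X, exists l : line X, on p l).
  { intro p. destruct (classic (on p l0)) as [H|H]; [eauto|].
    assert (p <> a) by (intro; subst; contradiction).
    destruct (join H0) as [l [H1 _]]; eauto. }
  destruct (noncol_ne x y z HL Hxyz) as [Hxy [Hxz Hyz]].
  destruct (noncol_ne a b c HL Hnc) as [Hab [Hac Hbc]].
  assert (S1 : exists u v, Full3 a u v /\ ~ collinear a u v).
  { destruct (classic (collinear x y a)) as [[n [N1 [N2 N3]]]|Hc].
    - destruct (classic (a = x)) as [E|Ne].
      + subst. exists y, z. auto.
      + exists x, z. split.
        * apply Full3_213. exact (KEX2 x y z a n Hf N1 N2 N3 Ne).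
        * intros [m [M1 [M2 M3]]]. assert (m = n) by (eapply line_uniq; eauto). subst.
          apply Hxyz. exists n; auto.
    - exists x, y. split.
      + apply Full3_231. exact (KEX x y z a HL Hxyz Hf Hc).
      + apply ncol_perm in Hc. tauto. }
  destruct S1 as [u [v [Hf1 Hn1]]].
  assert (S2 : exists w, Full3 a b w /\ ~ collinear a b w).
  { destruct (classic (collinear a u b)) as [[n [N1 [N2 N3]]]|Hc].
    - exists v. split.
      + exact (KEX2 a u v b n Hf1 N1 N2 N3 (not_eq_sym Hab)).
      + intros [m [M1 [M2 M3]]]. assert (m = n) by (exact (line_uniq a b m n Hab M1 M2 N1 N3)). subst.
        apply Hn1. exists n; auto.
    - exists u. split.
      + apply Full3_132. exact (KEX a u v b HL Hn1 Hf1 Hc).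
      + apply ncol_perm in Hc. tauto. }
  destruct S2 as [w [Hf2 Hn2]].
  pose proof (KEX a b w c HL Hn2 Hf2 Hnc) as Hf3.
  apply Hns. intros T HT HS. apply (Hf3 T HT); apply HS; auto.
Qed.
Lemma tri_full {X : affine_space} (a b c : line X) :
  a <> b -> a <> c -> b <> c -> related a b -> related a c -> related b c ->
  ~ (exists p, on p a /\ on p b /\ on p c) ->
  (forall d, exists e, related e a /\ related e b /\ related e c /\ related e d) ->
  exists x y z : point X, ~ collinear x y z /\ Full3 x y z.
Proof.
  intros Nab Nac Nbc [z [Za Zb]] [y [Ya Yc]] [x [Xb Xc]] Hnc He.
  assert (Hyz : y <> z) by (intro; subst; apply Hnc; eauto).
  assert (Hxy : x <> y) by (intro; subst; apply Hnc; eauto).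
  assert (Hxz : x <> z) by (intro; subst; apply Hnc; eauto).
  exists x, y, z. split.
  - intros [n [N1 [N2 N3]]].
    assert (n = a) by (exact (line_uniq y z n a Hyz N2 N3 Ya Za)). subst n.
    apply Nac. exact (line_uniq x y a c Hxy N1 N2 Xc Yc).
  - intros T HT Tx Ty Tz q.
    pose proof (sub_line T y z a HT Hyz Ty Tz Ya Za) as Ta.
    pose proof (sub_line T x z b HT Hxz Tx Tz Xb Zb) as Tb.
    pose proof (sub_line T x y c HT Hxy Tx Ty Xc Yc) as Tc.
    destruct (euclid X q a) as [m [Hma [Hqm _]]].
    destruct (He m) as [e [[s1 [S1e S1a]] [[s2 [S2e S2b]] [[s3 [S3e S3c]] [s [Se Sm]]]]]].
    assert (Te : forall w, on w e -> T w).
    { destruct (classic (s1 = s2)) as [E|N].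
      - subst s2. destruct (classic (s1 = s3)) as [E|N].
        + subst. exfalso. apply Hnc. eauto.
        + exact (sub_line T s1 s3 e HT N (Ta s1 S1a) (Tc s3 S3c) S1e S3e).
      - exact (sub_line T s1 s2 e HT N (Ta s1 S1a) (Tb s2 S2b) S1e S2e). }
    destruct HT as [_ HP].
    exact (HP a m s Ta (Te s Se) Sm Hma q Hqm).
Qed.

Lemma line_through {X : affine_space} (p : point X) (d : line X) :
  exists e, on p e /\ related e d.
Proof.
  destruct (classic (on p d)) as [H|H].
  - exists d. split; [auto|exists p; auto].
  - destruct (two_points X d) as [s [_ [_ [Hs _]]]].
    assert (p <> s) by (intro; subst; contradiction).
    destruct (join H0) as [e [H1 H2]]. exists e. split; [auto|exists s; auto].
Qed.

Lemma adj_at {X : affine_space} (l1 l2 : line X) : l1 <> l2 ->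
  forall p : point X, exists a b, adjacent a b /\ on p a /\ on p b.
Proof.
  intros N12 p.
  assert (Hm : exists m, ~ on p m).
  { destruct (classic (on p l1)) as [H1|H1]; [|eauto].
    destruct (classic (on p l2)) as [H2|H2]; [|eauto].
    destruct (two_points X l1) as [s [t [Hst [Hs Ht]]]].
    assert (Hq : exists q, on q l1 /\ q <> p).
    { destruct (classic (s = p)); [exists t; split; [auto|intro; subst; auto]|exists s; auto]. }
    destruct Hq as [q [Hq Hqp]].
    destruct (euclid X q l2) as [m [Hm [Hqm _]]].
    exists m. intro Hpm. assert (m = l2) by (exact (par_eq p Hm Hpm H2)). subst m.
    apply N12. exact (line_uniq p q l1 l2 (not_eq_sym Hqp) H1 Hq H2 Hqm). }
  destruct Hm as [m Hpm].
  destruct (two_points X m) as [s [t [Hst [Hs Ht]]]].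
  assert (Hps : p <> s) by (intro; subst; contradiction).
  assert (Hpt : p <> t) by (intro; subst; contradiction).
  destruct (join Hps) as [a [Ha1 Ha2]].
  destruct (join Hpt) as [b [Hb1 Hb2]].
  exists a, b. split; [|auto]. split.
  - exists p; auto.
  - intro E. subst b. apply Hpm. rewrite <- (line_uniq s t a m Hst Ha2 Hb2 Hs Ht). auto.
Qed.
Theorem theorem1 (A A' : affine_space) (phi : line A -> line A') :
  @dim_ge3 A' -> plucker_iso phi ->
  (forall a b : line A, adjacent a b ->
     exists p' : point A', on p' (phi a) /\ on p' (phi b) /\
       forall q', on q' (phi a) -> on q' (phi b) -> q' = p') /\
  (forall p : point A, exists a b, adjacent a b /\ on p a /\ on p b) /\
  (forall (a b c d : line A) (p : point A) (p' q' : point A'),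
     adjacent a b -> adjacent c d ->
     on p a -> on p b -> on p c -> on p d ->
     on p' (phi a) -> on p' (phi b) -> on q' (phi c) -> on q' (phi d) ->
     p' = q') /\
  (exists kappa : point A -> point A',
     (forall (a b : line A) (p : point A), adjacent a b -> on p a -> on p b ->
        on (kappa p) (phi a) /\ on (kappa p) (phi b)) /\
     collineation kappa).
Proof.
  intros Hdim [[g [Hgf Hfg]] Hrel].
  assert (Hinj : forall a b, phi a = phi b -> a = b).
  { intros a b E. rewrite <- (Hgf a), <- (Hgf b), E. reflexivity. }
  assert (H2' : exists l1 l2 : line A', l1 <> l2).
  { destruct Hdim as [a [b [c [d [Hnc Hns]]]]].
    assert (Had : a <> d).
    { intro E. subst d. apply Hns. intros T _ HS. apply HS; auto. }
    destruct (join Had) as [l0 [Hal0 _]].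
    assert (HL : forall p : point A', exists l : line A', on p l).
    { intro p. destruct (classic (on p l0)) as [H|H]; [eauto|].
      assert (p <> a) by (intro; subst; contradiction).
      destruct (join H0) as [l [H1 _]]; eauto. }
    destruct (noncol_ne a b c HL Hnc) as [Hab [Hac Hbc]].
    destruct (join Hab) as [l1 [L1 L2]]. destruct (join Hac) as [l2 [M1 M2]].
    exists l1, l2. intro E; subst. apply Hnc. exists l2; auto. }
  destruct H2' as [l1' [l2' N12']].
  assert (N12 : g l1' <> g l2').
  { intro E. apply N12'. rewrite <- (Hfg l1'), <- (Hfg l2'), E. reflexivity. }
  pose proof (adj_at _ _ N12) as Hadj.
  pose proof (adj_at _ _ N12') as Hadj'.
  assert (CONC : forall (a b c : line A) p, a <> b -> a <> c -> b <> c ->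
            on p a -> on p b -> on p c ->
            exists s, on s (phi a) /\ on s (phi b) /\ on s (phi c)).
  { intros a b c p Nab Nac Nbc Pa Pb Pc. apply NNPP. intro Hn.
    assert (Hr : forall x y, related x y -> related (phi x) (phi y))
      by (intros; apply Hrel; auto).
    destruct (tri_full (phi a) (phi b) (phi c)) as [x [y [z [Hxyz Hf]]]].
    - intro E; apply Nab; auto.
    - intro E; apply Nac; auto.
    - intro E; apply Nbc; auto.
    - apply Hr. exists p; auto.
    - apply Hr. exists p; auto.
    - apply Hr. exists p; auto.
    - exact Hn.
    - intro d'. destruct (line_through p (g d')) as [e [Pe Hed]].
      exists (phi e). repeat split.
      + apply Hr. exists p; auto.
      + apply Hr. exists p; auto.
      + apply Hr. exists p; auto.
      + rewrite <- (Hfg d'). apply Hr. exact Hed.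
    - exact (no_full Hdim x y z Hxyz Hf). }
  assert (PT : forall (a b c : line A) p p', a <> b -> on p a -> on p b -> on p c ->
            on p' (phi a) -> on p' (phi b) -> on p' (phi c)).
  { intros a b c p p' Nab Pa Pb Pc P'a P'b.
    destruct (classic (c = a)) as [E|Nca]; [subst; auto|].
    destruct (classic (c = b)) as [E|Ncb]; [subst; auto|].
    destruct (CONC a b c p) as [s [Sa [Sb Sc]]]; auto.
    destruct (classic (s = p')) as [E|Nsp]; [subst; auto|].
    exfalso. apply Nab. apply Hinj. exact (line_uniq s p' _ _ Nsp Sa P'a Sb P'b). }
  assert (Hspec : forall p : point A, exists p' : point A', exists a b, adjacent a b /\ on p a /\ on p b /\
            on p' (phi a) /\ on p' (phi b)).
  { intro p. destruct (Hadj p) as [a [b [[Hr Nab] [Pa Pb]]]].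
    assert (Hr' : related (phi a) (phi b)) by (apply Hrel; auto).
    destruct Hr' as [p' [H1 H2]]. exists p', a, b. repeat split; auto. }
  destruct (choice _ Hspec) as [kappa Hk].
  assert (KP : forall p a, on p a -> on (kappa p) (phi a)).
  { intros p a Pa. destruct (Hk p) as [a0 [b0 [[_ N] [P1 [P2 [K1 K2]]]]]].
    exact (PT a0 b0 a p _ N P1 P2 Pa K1 K2). }
  assert (Kinj : forall x y, kappa x = kappa y -> x = y).
  { intros x y E. apply NNPP. intro Nxy.
    destruct (join Nxy) as [l [Lx Ly]].
    destruct (Hadj x) as [a [b [[_ Nab] [Pa Pb]]]].
    assert (Hm : exists m, on x m /\ m <> l).
    { destruct (classic (a = l)); [subst; exists b; auto|exists a; auto]. }
    destruct Hm as [m [Xm Nml]].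
    destruct (euclid A y m) as [n [Hnm [Yn _]]].
    assert (Ym : ~ on y m).
    { intro H. apply Nml. exact (line_uniq x y m l Nxy Xm H Lx Ly). }
    assert (Hr : related (phi m) (phi n)).
    { exists (kappa x). split; [apply KP; auto| rewrite E; apply KP; auto]. }
    apply Hrel in Hr. destruct Hr as [s [Sm Sn]].
    assert (n = m) by (exact (par_eq s Hnm Sn Sm)). subst. contradiction. }
  assert (Ksurj : forall q', exists p, kappa p = q').
  { intro q'. destruct (Hadj' q') as [a' [b' [[Hr Nab] [Pa Pb]]]].
    assert (Hr2 : related (g a') (g b')).
    { apply Hrel. rewrite (Hfg a'), (Hfg b'). auto. }
    destruct Hr2 as [p [P1 P2]]. exists p.
    pose proof (KP p _ P1) as K1. pose proof (KP p _ P2) as K2.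
    rewrite Hfg in K1, K2.
    apply NNPP. intro Hne. apply Nab. exact (line_uniq _ _ a' b' Hne K1 Pa K2 Pb). }
  assert (HLA : forall p : point A, exists l : line A, on p l).
  { intro p. destruct (Hadj p) as [a [b [_ [Pa _]]]]. eauto. }
  split; [|split; [|split]].
  - intros a b [Hr Nab].
    apply Hrel in Hr. destruct Hr as [p' [H1 H2]].
    exists p'. split; [auto|split; [auto|]].
    intros q' Q1 Q2. apply NNPP. intro Hne. apply Nab. apply Hinj.
    exact (line_uniq _ _ _ _ Hne Q1 H1 Q2 H2).
  - exact Hadj.
  - intros a b c d p p' q' [_ Nab] [_ Ncd] Pa Pb Pc Pd P'a P'b Q'c Q'd.
    pose proof (PT a b c p p' Nab Pa Pb Pc P'a P'b) as P'c.
    pose proof (PT a b d p p' Nab Pa Pb Pd P'a P'b) as P'd.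
    apply NNPP. intro Hne. apply Ncd. apply Hinj.
    exact (line_uniq _ _ _ _ Hne P'c Q'c P'd Q'd).
  - exists kappa. split.
    + intros a b p _ Pa Pb. split; apply KP; auto.
    + split.
      * destruct (choice _ Ksurj) as [h Hh].
        exists h. split; [intro x; apply Kinj; rewrite Hh; auto | exact Hh].
      * intros x y z. split.
        -- intros [l [Lx [Ly Lz]]]. exists (phi l). repeat split; apply KP; auto.
        -- intros Hn [l' [L1 [L2 L3]]].
           destruct (noncol_ne x y z HLA Hn) as [Nxy [Nxz Nyz]].
           destruct (join Nxy) as [l1 [A1 A2]]. destruct (join Nxz) as [l2 [B1 B2]].
           assert (E1 : phi l1 = l').
           { apply (line_uniq (kappa x) (kappa y) (phi l1) l'); [intro E; apply Nxy; apply Kinj; auto | apply KP; auto | apply KP; auto | auto | auto]. }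
           assert (E2 : phi l2 = l').
           { apply (line_uniq (kappa x) (kappa z) (phi l2) l'); [intro E; apply Nxz; apply Kinj; auto | apply KP; auto | apply KP; auto | auto | auto]. }
           assert (l1 = l2) by (apply Hinj; congruence). subst.
           apply Hn. exists l2; auto.
Qed.
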